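(* For every $a>0$ and $\alpha>0$, the second Robin eigenvalue of an interval $I_a$ of length $a$ satisfies \[ \frac{\big(2\pi-a\alpha+\sqrt{4\pi^2+12a\alpha\pi+\alpha^2a^2}\big)^2}{16a^2}\le\lambda_2(I_a,\alpha) \] and \[ \lambda_2(I_a,\alpha)\le\begin{cases}\Big(\dfrac{\pi}{2a}+\sqrt{\dfrac{\pi^2}{4a^2}+\dfrac{2\alpha}{a}}\Big)^2, & a\alpha\le\dfrac{\pi^2}{2},\\[2ex] \dfrac{\pi^2}{16a^4\alpha^2}\Big(4a\alpha-\pi^2+\sqrt{\pi^4+16a^2\alpha^2}\Big)^2, & a\alpha\ge\dfrac{\pi^2}{2}.\end{cases} \]
   Context: For an interval $I_a\subset\mathbb{R}$ of length $a>0$ and $\alpha>0$, $\lambda_1(I_a,\alpha)<\lambda_2(I_a,\alpha)<\cdots$ denote the eigenvalues of the Robin problem $-u''=\lambda u$ on $I_a$ with $\partial_\nu u+\alpha u=0$ at both endpoints ($\partial_\nu$ the outward derivative). Equivalently, $\lambda_2(I_a,\alpha)$ is the smallest root in $(\pi^2/a^2,4\pi^2/a^2)$ of $\alpha=-\sqrt\lambda\cot(a\sqrt\lambda/2)$. *)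

(* Defs.v *)
From Stdlib Require Import Reals.
Open Scope R_scope.

(* Robin secular function for the second eigenvalue on an interval of length a:
   alpha = - sqrt(lambda) * cot(a sqrt(lambda) / 2), with cot = cos / sin. *)
Definition robin_secular (a lambda : R) : R :=
  - sqrt lambda * (cos (a * sqrt lambda / 2) / sin (a * sqrt lambda / 2)).

Definition is_robin_lambda2 (a alpha l : R) : Prop :=
  PI ^ 2 / a ^ 2 < l < 4 * PI ^ 2 / a ^ 2 /\
  alpha = robin_secular a l /\
  (forall m, PI ^ 2 / a ^ 2 < m < 4 * PI ^ 2 / a ^ 2 ->
     alpha = robin_secular a m -> l <= m).

(* Main.v *)
Require Import Defs.
From Stdlib Require Import Reals Lra.
Open Scope R_scope.
Lemma cos_ub_eq a : cos_ub a = 1 - a^2/2 + a^4/24 - a^6/720 + a^8/40320.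
Proof. unfold cos_ub, cos_approx, cos_term. cbn [sum_f_R0 Nat.mul Nat.add]. rewrite ?fact_simpl, ?mult_INR. simpl INR. simpl pow. field. Qed.
Lemma cos_lb_eq a : cos_lb a = 1 - a^2/2 + a^4/24 - a^6/720.
Proof. unfold cos_lb, cos_approx, cos_term. cbn [sum_f_R0 Nat.mul Nat.add]. rewrite ?fact_simpl, ?mult_INR. simpl INR. simpl pow. field. Qed.
Lemma sin_lb_eq a : sin_lb a = a - a^3/6 + a^5/120 - a^7/5040.
Proof. unfold sin_lb, sin_approx, sin_term. cbn [sum_f_R0 Nat.mul Nat.add]. rewrite ?fact_simpl, ?mult_INR. simpl INR. simpl pow. field. Qed.
Lemma sin_ub_eq a : sin_ub a = a - a^3/6 + a^5/120 - a^7/5040 + a^9/362880.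
Proof. unfold sin_ub, sin_approx, sin_term. cbn [sum_f_R0 Nat.mul Nat.add]. rewrite ?fact_simpl, ?mult_INR. simpl INR. simpl pow. field. Qed.

Lemma pi_bnd : 3 < PI < 16/5.
Proof.
  split. { pose proof PI2_3_2; lra. }
  destruct (Rlt_or_le PI (16/5)) as [H|H]; [lra|]. exfalso.
  assert (Hc : 0 <= cos (8/5)) by (apply cos_ge_0; lra).
  destruct (COS (8/5)) as [_ H2]; try lra.
  rewrite cos_ub_eq in H2. lra.
Qed.

Lemma sin_ge3 x : 0 <= x -> x <= PI -> x - x^3/6 <= sin x.
Proof. intros. pose proof pi_bnd. destruct (SIN x) as [H2 _]; auto. rewrite sin_lb_eq in H2.
  assert (x*x <= (16/5)*(16/5)) by (apply Rmult_le_compat; lra). assert (x^2 <= 11) by (simpl; lra). assert (0 <= x^5) by (apply pow_le; lra).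
  assert (x^7 = x^5 * x^2) by ring. assert (0 <= x^5 * (11 - x^2)) by (apply Rmult_le_pos; lra). nra. Qed.

Lemma cos_le4 x : 0 <= x -> x <= PI/2 -> cos x <= 1 - x^2/2 + x^4/24.
Proof. intros. pose proof pi_bnd. destruct (COS x) as [_ H2]; try lra. rewrite cos_ub_eq in H2.
  assert (x*x <= (8/5)*(8/5)) by (apply Rmult_le_compat; lra). assert (x^2 <= 3) by (simpl; lra). assert (0 <= x^6) by (apply pow_le; lra).
  assert (x^8 = x^6 * x^2) by ring. assert (0 <= x^6 * (3 - x^2)) by (apply Rmult_le_pos; lra). nra. Qed.

Lemma cos_ge2 x : 0 <= x -> x <= PI/2 -> 1 - x^2/2 <= cos x.
Proof. intros. pose proof pi_bnd. destruct (COS x) as [H2 _]; try lra. rewrite cos_lb_eq in H2.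
  assert (x*x <= (8/5)*(8/5)) by (apply Rmult_le_compat; lra). assert (x^2 <= 3) by (simpl; lra). assert (0 <= x^4) by (apply pow_le; lra).
  assert (x^6 = x^4 * x^2) by ring. assert (0 <= x^4 * (3 - x^2)) by (apply Rmult_le_pos; lra). nra. Qed.

Lemma sin_le x : 0 <= x -> sin x <= x.
Proof. intros [H|H]. - left; apply sin_lt_x; auto. - subst; rewrite sin_0; lra. Qed.
Lemma polyB1 P y : 3 < P < 16/5 -> 0 <= y <= 1 ->
  P^3*(1 - y^2/2 + y^4/24) <= (1 - y^2/6)*(P^2-4*y^2)*(P+2*y).
Proof. intros. 
  assert (E: (1 - y^2/6)*(P^2-4*y^2)*(P+2*y) - P^3*(1 - y^2/2 + y^4/24) =
    y * (2*P^2 - 4*P*y + (P^3/3)*y - 8*y^2 - (P^2/3)*y^2 + (2*P/3 - P^3/24)*y^3 + (4/3)*y^4)) by field.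
  assert (0 <= 2*P^2 - 4*P*y + (P^3/3)*y - 8*y^2 - (P^2/3)*y^2 + (2*P/3 - P^3/24)*y^3 + (4/3)*y^4).
  { assert (0 <= (2*P/3 - P^3/24)*y^3). { apply Rmult_le_pos. nra. apply pow_le; lra. }
    assert (0 <= y^4) by (apply pow_le; lra).
    assert (0 <= P*y*(P^2/3-3)) by (apply Rmult_le_pos; nra).
    assert (y^2 <= 1) by nra.
    assert (y^2*(8+P^2/3) <= 8 + P^2/3) by (assert (0 <= (1-y^2)*(8+P^2/3)) by (apply Rmult_le_pos; nra); nra).
    nra. }
  nra.
Qed.
Lemma polyB2 P z : 3 < P < 16/5 -> 0 <= z <= P/2 - 1 ->
  P^3*(P/2 - z) <= 8*(P-z)^2*(1 - z^2/2).
Proof. intros.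
  assert (h1: P^2 - 2*P*z <= (P-z)^2) by nra.
  assert (h2: 1 - 3/10*z <= 1 - z^2/2) by nra.
  assert (h3: 0 <= P^2 - 2*P*z) by nra.
  assert (h4: 8*(P^2 - 2*P*z)*(1 - 3/10*z) <= 8*(P-z)^2*(1 - z^2/2)).
  { rewrite !Rmult_assoc. apply Rmult_le_compat_l; [lra|]. apply Rmult_le_compat; lra. }
  assert (hh: P*(P^2 - 12/5*P - 16) < 0) by nra.
  assert (h5: 0 <= (P/2 - 1 - z) * (- (P*(P^2 - 12/5*P - 16)))) by (apply Rmult_le_pos; lra).
  assert (h6: 0 < P*(-22/10*P^2 + 24/10*P + 16)) by nra.
  assert (h7: 0 <= P*z^2) by nra.
  nra. Qed.
Lemma polyA2 P z : 3 < P < 16/5 -> 0 <= z <= P/2 - 1 -> 1 <= (P-2*z)*(1-z^2/6).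
Proof. intros. assert (z^2 <= 1) by nra.
  assert (2 * (5/6) <= (P-2*z)*(1-z^2/6)) by (apply Rmult_le_compat; lra). lra. Qed.
Lemma polyT2 P z : 3 < P < 16/5 -> 0 <= z <= P/2 - 1 -> (P/2 - z)*z <= 1 - z^2/2.
Proof. intros. assert (P*z <= 16/5 * (6/10)) by (apply Rmult_le_compat; lra). nra. Qed.

Lemma shift_y y : sin y = cos (PI/2 - y) /\ cos y = sin (PI/2 - y).
Proof. rewrite cos_shift, sin_shift. auto. Qed.

Lemma trigT y : 0 < y < PI/2 -> y * cos y <= sin y.
Proof. intros. pose proof pi_bnd.
  destruct (Rle_or_lt y 1).
  - pose proof (sin_ge3 y ltac:(lra) ltac:(lra)). pose proof (cos_le4 y ltac:(lra) ltac:(lra)).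
    assert (y * cos y <= y * (1 - y^2/2 + y^4/24)) by (apply Rmult_le_compat_l; lra).
    assert (0 <= y^2*(8 - y^2)) by (apply Rmult_le_pos; nra). nra.
  - destruct (shift_y y) as [-> ->]. set (z := PI/2 - y).
    assert (0 <= z <= PI/2 - 1) by (unfold z; lra).
    pose proof (sin_le z ltac:(lra)). pose proof (cos_ge2 z ltac:(lra) ltac:(lra)).
    pose proof (polyT2 PI z ltac:(lra) ltac:(lra)).
    replace y with (PI/2 - z) by (unfold z; ring).
    assert ((PI/2 - z) * sin z <= (PI/2 - z) * z) by (apply Rmult_le_compat_l; lra). nra.
Qed.

Lemma trigA y : 0 < y < PI/2 -> sin y * (PI - 2*y) <= 4*y*cos y.
Proof. intros. pose proof pi_bnd.
  destruct (Rle_or_lt y 1).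
  - pose proof (sin_le y ltac:(lra)). pose proof (cos_ge2 y ltac:(lra) ltac:(lra)).
    assert (sin y * (PI - 2*y) <= y * (PI - 2*y)) by (apply Rmult_le_compat_r; lra).
    assert (4*y*(1 - y^2/2) <= 4*y*cos y) by (apply Rmult_le_compat_l; lra).
    nra.
  - destruct (shift_y y) as [-> ->]. set (z := PI/2 - y).
    assert (0 <= z <= PI/2 - 1) by (unfold z; lra).
    pose proof (sin_ge3 z ltac:(lra) ltac:(lra)). pose proof (COS z ltac:(lra) ltac:(lra)).
    pose proof (cos_ge2 z ltac:(lra) ltac:(lra)).
    pose proof (COS_bound z). 
    pose proof (polyA2 PI z ltac:(lra) ltac:(lra)).
    replace y with (PI/2 - z) by (unfold z; ring).
    assert (cos z * (2*z) <= 2*z) by nra.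
    assert ((PI - 2*z) * (z - z^3/6) <= (PI - 2*z) * sin z) by (apply Rmult_le_compat_l; lra).
    nra.
Qed.

Lemma trigB y : 0 < y < PI/2 -> PI^3 * y * cos y <= sin y * (PI^2 - 4*y^2) * (PI + 2*y).
Proof. intros. pose proof pi_bnd.
  destruct (Rle_or_lt y 1).
  - pose proof (sin_ge3 y ltac:(lra) ltac:(lra)). pose proof (cos_le4 y ltac:(lra) ltac:(lra)).
    pose proof (polyB1 PI y ltac:(lra) ltac:(lra)).
    assert (0 <= (PI^2 - 4*y^2) * (PI + 2*y)) by (apply Rmult_le_pos; nra).
    assert (PI^3 * y * cos y <= PI^3 * y * (1 - y^2/2 + y^4/24)) by (apply Rmult_le_compat_l; [apply Rmult_le_pos; [apply pow_le|]|]; lra).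
    assert ((y - y^3/6) * ((PI^2 - 4*y^2) * (PI + 2*y)) <= sin y * ((PI^2 - 4*y^2) * (PI + 2*y))) by (apply Rmult_le_compat_r; lra).
    assert (y * (PI^3 * (1 - y^2/2 + y^4/24)) <= y * ((1 - y^2/6)*(PI^2-4*y^2)*(PI+2*y))) by (apply Rmult_le_compat_l; lra).
    nra.
  - destruct (shift_y y) as [-> ->]. remember (PI/2 - y) as z eqn:Hz.
    assert (0 <= z <= PI/2 - 1) by lra.
    pose proof (sin_le z ltac:(lra)). pose proof (cos_ge2 z ltac:(lra) ltac:(lra)).
    pose proof (polyB2 PI z ltac:(lra) ltac:(lra)).
    replace y with (PI/2 - z) by lra. clear Hz.
    rewrite Rmult_assoc. replace ((PI ^ 2 - 4 * (PI / 2 - z) ^ 2) * (PI + 2 * (PI / 2 - z))) with (8*z*(PI-z)^2) by field.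
    assert (PI^3 * (PI/2 - z) * sin z <= PI^3 * (PI/2 - z) * z) by (apply Rmult_le_compat_l; [apply Rmult_le_pos; [apply pow_le|]|]; lra).
    assert (0 <= 8*z*(PI-z)^2) by (apply Rmult_le_pos; [lra| apply pow_le; lra] || nra).
    assert ((1 - z^2/2) * (8*z*(PI-z)^2) <= cos z * (8*z*(PI-z)^2)) by (apply Rmult_le_compat_r; lra).
    assert (z * (PI^3*(PI/2 - z)) <= z * (8*(PI-z)^2*(1 - z^2/2))) by (apply Rmult_le_compat_l; lra).
    nra.
Qed.

Lemma bridge a alpha m : 0 < a -> PI ^ 2 / a ^ 2 < m < 4 * PI ^ 2 / a ^ 2 ->
  alpha = robin_secular a m ->
  exists y, 0 < y < PI/2 /\ m = ((2*y+PI)/a)^2 /\ a*alpha*cos y = (2*y+PI)*sin y.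
Proof.
  intros ha [H1 H2] He. pose proof pi_bnd.
  assert (hm : 0 < m). { assert (0 < PI^2/a^2) by (apply Rdiv_lt_0_compat; nra). lra. }
  set (s := sqrt m) in *.
  assert (hs : s * s = m) by (apply sqrt_sqrt; lra).
  assert (hs0 : 0 <= s) by apply sqrt_pos.
  set (t := a * s).
  assert (ht1 : PI^2 < t^2).
  { unfold t. replace ((a*s)^2) with (m * a^2) by (rewrite <- hs; ring).
    apply (Rmult_lt_compat_r (a^2)) in H1; [|nra]. replace (PI^2/a^2*a^2) with (PI^2) in H1 by (field; lra). lra. }
  assert (ht2 : t^2 < 4*PI^2).
  { unfold t. replace ((a*s)^2) with (m * a^2) by (rewrite <- hs; ring).
    apply (Rmult_lt_compat_r (a^2)) in H2; [|nra]. replace (4*PI^2/a^2*a^2) with (4*PI^2) in H2 by (field; lra). lra. }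
  assert (ht0 : 0 <= t) by (unfold t; nra).
  assert (htA : PI < t) by nra.
  assert (htB : t < 2*PI) by nra.
  exists (t/2 - PI/2). split; [lra|]. split.
  - replace ((2 * (t / 2 - PI / 2) + PI) / a) with s by (unfold t; field; lra). rewrite <- hs. ring.
  - unfold robin_secular in He. fold s in He.
    replace (a * s / 2) with (PI/2 - - (t/2 - PI/2)) in He by (unfold t; field).
    rewrite cos_shift, sin_shift, sin_neg, cos_neg in He.
    assert (0 < cos (t/2 - PI/2)) by (apply cos_gt_0; lra).
    rewrite He. replace (2 * (t / 2 - PI / 2) + PI) with (a*s) by (unfold t; field).
    field. lra.
Qed.

Theorem propositionA2 (a alpha : R) (ha : 0 < a) (halpha : 0 < alpha) :
  (exists l, is_robin_lambda2 a alpha l) /\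
  (forall l, is_robin_lambda2 a alpha l ->
     (2 * PI - a * alpha
        + sqrt (4 * PI ^ 2 + 12 * a * alpha * PI + alpha ^ 2 * a ^ 2)) ^ 2
       / (16 * a ^ 2) <= l /\
     (a * alpha <= PI ^ 2 / 2 ->
        l <= (PI / (2 * a) + sqrt (PI ^ 2 / (4 * a ^ 2) + 2 * alpha / a)) ^ 2) /\
     (PI ^ 2 / 2 <= a * alpha ->
        l <= PI ^ 2 / (16 * a ^ 4 * alpha ^ 2)
             * (4 * a * alpha - PI ^ 2 + sqrt (PI ^ 4 + 16 * a ^ 2 * alpha ^ 2)) ^ 2)).
Proof.
  pose proof pi_bnd.
  split.
  - set (b := a * alpha).
    assert (hb : 0 < b) by (unfold b; nra).
    assert (Hat : continuity atan) by (intro x; apply derivable_continuous_pt, derivable_pt_atan).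
    set (f := (((fct_cte 2 * atan)%F + fct_cte PI) * id - fct_cte b)%F).
    assert (Hf : forall x, f x = (2 * atan x + PI) * x - b) by (intro x; reflexivity).
    assert (Hfc : continuity f).
    { apply continuity_minus; [|apply continuity_const; intros ? ?; reflexivity].
      apply continuity_mult; [|apply derivable_continuous, derivable_id].
      apply continuity_plus; [|apply continuity_const; intros ? ?; reflexivity].
      apply continuity_mult; [apply continuity_const; intros ? ?; reflexivity| exact Hat]. }
    assert (hbp : 0 < b / PI) by (apply Rdiv_lt_0_compat; lra).
    assert (hat0 : 0 < atan (b/PI)) by (rewrite <- atan_0; apply atan_increasing; lra).
    destruct (IVT f 0 (b/PI) Hfc hbp) as [v [Hv1 Hv2]].
    { rewrite Hf, atan_0. lra. }
    { rewrite Hf. replace ((2 * atan (b / PI) + PI) * (b / PI) - b) with (2 * atan (b/PI) * (b/PI)) by (field; lra).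
      apply Rmult_lt_0_compat; lra. }
    rewrite Hf in Hv2.
    assert (hv0 : 0 < v).
    { destruct (Req_dec v 0) as [E|E]; [|lra]. rewrite E, atan_0 in Hv2. lra. }
    set (y := atan v) in *.
    assert (Hy : 0 < y < PI/2).
    { split. { unfold y; rewrite <- atan_0; apply atan_increasing; lra. } pose proof (atan_bound v). fold y in H0. lra. }
    assert (Htan : tan y = v) by apply tan_atan.
    assert (Hbv : (2*y+PI)*v = b) by lra.
    assert (hc : 0 < cos y) by (apply cos_gt_0; lra).
    exists (((2*y+PI)/a)^2).
    assert (Hrange : forall z, 0 < z < PI/2 -> PI ^ 2 / a ^ 2 < ((2*z+PI)/a)^2 < 4 * PI ^ 2 / a ^ 2).
    { intros z Hz. replace (PI ^ 2 / a ^ 2) with ((PI/a)^2) by (field; lra).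
      replace (4 * PI ^ 2 / a ^ 2) with ((2*PI/a)^2) by (field; lra).
      assert (0 < PI/a) by (apply Rdiv_lt_0_compat; lra).
      assert (PI/a < (2*z+PI)/a) by (unfold Rdiv; apply Rmult_lt_compat_r; [apply Rinv_0_lt_compat|]; lra).
      assert ((2*z+PI)/a < 2*PI/a) by (unfold Rdiv; apply Rmult_lt_compat_r; [apply Rinv_0_lt_compat|]; lra).
      split; nra. }
    split; [apply Hrange; auto|]. split.
    + unfold robin_secular. rewrite sqrt_pow2 by (apply Rlt_le, Rdiv_lt_0_compat; lra).
      replace (a * ((2 * y + PI) / a) / 2) with (PI/2 - - y) by (field; lra).
      rewrite cos_shift, sin_shift, sin_neg, cos_neg.
      replace (- sin y / cos y) with (- v) by (rewrite <- Htan; unfold tan; field; lra).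
      replace (- ((2*y+PI)/a) * - v) with ((2*y+PI)*v/a) by (field; lra).
      rewrite Hbv. unfold b. field; lra.
    + intros m Hm Hem.
      destruct (bridge a alpha m ha Hm Hem) as [y1 [Hy1 [Hm1 Hk1]]].
      assert (hc1 : 0 < cos y1) by (apply cos_gt_0; lra).
      assert (Hb1 : (2*y1+PI) * tan y1 = b) by (unfold tan, b; rewrite <- (Rmult_1_r (a*alpha)); rewrite <- (Rinv_r (cos y1)) by lra; rewrite <- Rmult_assoc, Hk1; field; lra).
      assert (Hyy : y <= y1).
      { destruct (Rle_or_lt y y1) as [|Hlt]; [auto|exfalso].
        assert (tan y1 < tan y) by (apply tan_increasing; lra).
        assert (0 < tan y1) by (apply tan_gt_0; lra).
        assert ((2*y1+PI) * tan y1 < (2*y+PI) * tan y) by (apply Rmult_le_0_lt_compat; lra).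
        rewrite Htan in *. lra. }
      rewrite Hm1. apply pow_incr. split. { apply Rlt_le, Rdiv_lt_0_compat; lra. }
      unfold Rdiv; apply Rmult_le_compat_r; [apply Rlt_le, Rinv_0_lt_compat|]; lra.
  - intros l [Hr [He _]].
    destruct (bridge a alpha l ha Hr He) as [y [Hy [Hl Hk]]].
    set (b := a * alpha) in *.
    assert (hb : 0 < b) by (unfold b; nra).
    set (t := 2*y + PI) in *.
    assert (hc : 0 < cos y) by (apply cos_gt_0; lra).
    assert (hsn : 0 < sin y) by (apply sin_gt_0; lra).
    assert (KT : t * y <= b).
    { pose proof (trigT y Hy). apply (Rmult_le_reg_r (cos y)); auto.
      assert (t * (y * cos y) <= t * sin y) by (apply Rmult_le_compat_l; unfold t; lra). nra. }
    assert (KA : b * (PI - 2*y) <= 4*y*t).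
    { pose proof (trigA y Hy). apply (Rmult_le_reg_r (cos y)); auto.
      assert (t * (sin y * (PI - 2*y)) <= t * (4*y*cos y)) by (apply Rmult_le_compat_l; unfold t; lra). nra. }
    assert (KB : PI^3 * y <= b * (PI^2 - 4*y^2)).
    { pose proof (trigB y Hy). apply (Rmult_le_reg_r (cos y)); auto.
      replace (b * (PI ^ 2 - 4 * y ^ 2) * cos y) with ((b * cos y) * (PI ^ 2 - 4 * y ^ 2)) by ring.
      rewrite Hk. unfold t. replace ((2*y+PI)*sin y*(PI^2-4*y^2)) with (sin y*(PI^2-4*y^2)*(PI+2*y)) by ring. auto. }
    assert (ht : PI < t < 2*PI) by (unfold t; lra).
    assert (Et : t = 2*y+PI) by reflexivity.
    clearbody t. clear Hk He Hr. rewrite Hl.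
    split; [|split].
    + replace (4 * PI ^ 2 + 12 * a * alpha * PI + alpha ^ 2 * a ^ 2) with (4*PI^2+12*b*PI+b^2) by (unfold b; ring).
      set (D := 4*PI^2+12*b*PI+b^2).
      assert (hD: 0 <= D) by (unfold D; nra).
      pose proof (sqrt_sqrt D hD) as hu. pose proof (sqrt_pos D). set (u := sqrt D) in *.
      assert (hX0 : 0 <= 2*PI - b + u).
      { destruct (Rle_or_lt b (2*PI)); [lra|]. assert ((b-2*PI)^2 <= D) by (unfold D; nra). nra. }
      assert (hK : 0 <= 2*t*(t-PI) + b*(t-2*PI)).
      { replace (2*t*(t-PI) + b*(t-2*PI)) with (4*y*t - b*(PI-2*y)) by (rewrite Et; ring). lra. }
      assert (hX1 : 2*PI - b + u <= 4*t).
      { assert (D <= (4*t - 2*PI + b)^2) by (unfold D; nra). nra. }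
      assert (hX2 : (2*PI - b + u)^2 <= 16*t^2) by nra.
      unfold Rdiv. replace ((t * / a)^2) with (16*t^2 * /(16*a^2)) by (field; lra).
      apply Rmult_le_compat_r; [apply Rlt_le, Rinv_0_lt_compat; nra | lra].
    + intros _.
      set (W := PI^2/(4*a^2) + 2*alpha/a).
      assert (hWa : W*a^2 = PI^2/4 + 2*b) by (unfold W,b; field; lra).
      assert (hW : 0 <= W) by nra.
      pose proof (sqrt_sqrt W hW) as hw. pose proof (sqrt_pos W). set (w := sqrt W) in *.
      set (q := t/a - PI/(2*a)).
      assert (hq : q*a = t - PI/2) by (unfold q; field; lra).
      assert (hq0 : 0 <= q) by nra.
      assert (hqw : q*q <= w*w).
      { apply (Rmult_le_reg_r (a^2)); [nra|]. rewrite hw, hWa.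
        replace (q*q*a^2) with ((q*a)*(q*a)) by ring. rewrite hq.
        assert (t*(2*y) <= 2*b) by lra. rewrite Et in *. nra. }
      assert (q <= w) by nra.
      apply pow_incr. split. { apply Rmult_le_pos; [lra|]. apply Rlt_le, Rinv_0_lt_compat; lra. }
      replace (t/a) with (q + PI/(2*a)) by (unfold q; ring). lra.
    + intros _.
      replace (16*a^2*alpha^2) with (16*b^2) by (unfold b; ring).
      pose proof (sqrt_pos (PI^4+16*b^2)).
      assert (hv : sqrt (PI^4+16*b^2) * sqrt (PI^4+16*b^2) = PI^4+16*b^2) by (apply sqrt_sqrt; nra).
      set (v := sqrt (PI^4+16*b^2)) in *.
      replace (PI ^ 2 / (16 * a ^ 4 * alpha ^ 2) * (4 * a * alpha - PI ^ 2 + v) ^ 2)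
        with (((PI*(4*b - PI^2 + v)/(4*b))/a)^2) by (unfold b; field; lra).
      apply pow_incr. split. { apply Rmult_le_pos; [lra|]. apply Rlt_le, Rinv_0_lt_compat; lra. }
      unfold Rdiv at 1 3. apply Rmult_le_compat_r; [apply Rlt_le, Rinv_0_lt_compat; lra|].
      apply (Rmult_le_reg_r (4*b)); [lra|].
      replace (PI * (4 * b - PI ^ 2 + v) * / (4 * b) * (4 * b)) with (PI * (4 * b - PI ^ 2 + v)) by (field; lra).
      assert (hL : 8*b*y + PI^3 <= PI*v).
      { assert (hp : 0 <= PI*v) by nra.
        assert ((8*b*y + PI^3)^2 <= (PI*v)^2).
        { replace ((PI*v)^2) with (PI^2*(v*v)) by ring. rewrite hv.
          assert (0 <= 16*b*(b*(PI^2 - 4*y^2) - PI^3*y)) by (apply Rmult_le_pos; lra).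
          nra. }
        assert (0 <= 8*b*y + PI^3) by nra. nra. }
      rewrite Et. assert (E2: (2*y+PI)*(4*b) = 8*b*y + 4*b*PI) by ring.
      assert (E3: PI*(4*b-PI^2+v) = 4*b*PI - PI^3 + PI*v) by ring. lra.
Qed.
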